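(* Let $G$ be a compact matrix Lie group of $n\times n$ unitary matrices with normalized Haar measure $\eta$, let $\epsilon>0$, and let $X=\{x_1,\dots,x_N\}\subset\mathbb{C}^n$ satisfy $x_i\neq x_j$ for $i\neq j$ and $Ax_i\neq x_i$ for all $i$ and all $A\in G$ with $A\neq I$. Let $t$ be a positive integer and let $P^t_{ij}$ be as in the context. Suppose $x_j=Q\cdot x_i$ for some $Q\in G$. Then for all $k,r\in[N]$ and $R\in G$, $$\int_G P^t_{ik}(I,C)\,P^t_{ir}(I,CR)\,d\eta(C)=\int_G P^t_{jk}(I,C)\,P^t_{jr}(I,CR)\,d\eta(C),$$ i.e. $P^t_{i,\cdot}(I,\cdot)\circledast P^t_{i,\cdot}(I,\cdot)=P^t_{j,\cdot}(I,\cdot)\circledast P^t_{j,\cdot}(I,\cdot)$ as functions on $[N]^2\times G$.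
   Context: $[N]=\{1,\dots,N\}$. $W_{ij}(A,B)=e^{-\|Ax_i-Bx_j\|^2/\epsilon}$; $D_{ii}=\sum_{j=1}^N\int_G W_{ij}(I,C)\,d\eta(C)$; $P_{ij}(A,B)=W_{ij}(A,B)/D_{ii}$. $P^1_{ij}=P_{ij}$ and $P^t_{ij}(A,B)=\sum_{k=1}^N\int_G P^{t-1}_{ik}(A,C)P_{kj}(C,B)\,d\eta(C)$ for $t\ge2$. For functions $f,g$ on $[N]\times G$ (written $f(k,C)=f_k(C)$), $f\circledast g$ is the function on $[N]^2\times G$ given by $(f\circledast g)(k,r,R)=\int_G f_k(C)\,g_r(CR)\,d\eta(C)$; $P^t_{i,\cdot}(I,\cdot)$ denotes $(k,C)\mapsto P^t_{ik}(I,C)$. *)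

(* Defs.v *)
From HB Require Import structures.
From mathcomp Require Import all_boot all_order all_algebra.
From mathcomp Require Import all_classical all_reals all_analysis.
From mathcomp Require Import complex.
Import numFieldTopology.Exports numFieldNormedType.Exports.
Import Order.TTheory GRing.Theory Num.Theory.

Set Implicit Arguments.
Unset Strict Implicit.
Unset Printing Implicit Defensive.

Local Open Scope classical_set_scope.
Local Open Scope ring_scope.

(* The complex numbers R[i] get their usual (modulus) topology; matrices
   'M[R[i]]_n then carry the product (= usual) topology. *)
HB.instance Definition _ (R : rcfType) := PseudoPointedMetric.copy R[i] (R[i])^o.

Definition borelM (R : realType) (n : nat) :=
  g_sigma_algebraType (@open 'M[R[i]]_n).

Definition adjM (R : realType) (n : nat) (A : 'M[R[i]]_n) : 'M[R[i]]_n :=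
  \matrix_(a < n, b < n) Complex (complex.Re (A b a)) (- complex.Im (A b a)).

Definition unitary (R : realType) (n : nat) (A : 'M[R[i]]_n) : Prop :=
  adjM A *m A = 1%:M.

(* G is a compact matrix Lie group of unitary matrices, i.e. a compact
   subgroup of U(n) (closed subgroups of U(n) are Lie groups, Cartan). *)
Definition compact_unitary_group (R : realType) (n : nat)
    (G : set 'M[R[i]]_n) : Prop :=
  [/\ compact G, G 1%:M,
      (forall A B, G A -> G B -> G (A *m B)),
      (forall A, G A -> G (invmx A)) &
      (forall A, G A -> unitary A)].

(* eta is the normalized (left-invariant) Haar measure of G, seen as a Borel
   probability measure on the matrix space concentrated on G. *)
Definition normalized_haar (R : realType) (n : nat) (G : set 'M[R[i]]_n)
    (eta : probability (borelM R n) R) : Prop :=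
  eta (G : set (borelM R n)) = 1%E /\
  forall Q : 'M[R[i]]_n, G Q ->
    forall A : set (borelM R n), measurable A ->
      eta ((fun C : borelM R n => (Q *m C : borelM R n)) @^-1` A) = eta A.

Definition sqnorm (R : realType) (n : nat) (v : 'cV[R[i]]_n) : R :=
  \sum_(k < n) (complex.Re (v k ord0) ^+ 2 + complex.Im (v k ord0) ^+ 2).

Section Kernels.
Variables (R : realType) (n N : nat) (G : set 'M[R[i]]_n)
  (eta : probability (borelM R n) R) (x : 'I_N -> 'cV[R[i]]_n) (eps : R).

Definition intG (f : 'M[R[i]]_n -> R) : R :=
  Rintegral eta (G : set (borelM R n)) (f : borelM R n -> R).

Definition Wk (i j : 'I_N) (A B : 'M[R[i]]_n) : R :=
  expR (- (sqnorm (A *m x i - B *m x j) / eps)).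

Definition Dk (i : 'I_N) : R := \sum_(j < N) intG (fun C => Wk i j 1%:M C).

Definition Pk (i j : 'I_N) (A B : 'M[R[i]]_n) : R := Wk i j A B / Dk i.

(* P^t; P^1 = P, P^t = P^(t-1) * P.  (The value at t = 0 is irrelevant.) *)
Fixpoint Pt (t : nat) : 'I_N -> 'I_N -> 'M[R[i]]_n -> 'M[R[i]]_n -> R :=
  match t with
  | 0 => Pk
  | t'.+1 =>
    if t' is 0 then Pk
    else fun i j A B =>
      \sum_(k < N) intG (fun C => Pt t' i k A C * Pk k j C B)
  end.

Definition oconv (f g : 'I_N -> 'M[R[i]]_n -> R) (k r : 'I_N)
    (Rm : 'M[R[i]]_n) : R :=
  intG (fun C => f k C * g r (C *m Rm)).

End Kernels.

(* Main.v *)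
Require Import Defs.
From HB Require Import structures.
From mathcomp Require Import all_boot all_order all_algebra.
From mathcomp Require Import all_classical all_reals all_analysis.
From mathcomp Require Import complex.
Import numFieldTopology.Exports numFieldNormedType.Exports.
Import Order.TTheory GRing.Theory Num.Theory.
Local Open Scope classical_set_scope.
Local Open Scope ring_scope.


Set Implicit Arguments.
Unset Strict Implicit.
Unset Printing Implicit Defensive.

Section Cont.

Variables (R : realType) (n : nat).
Lemma mulmx_continuous (M : 'M[R[i]]_n) : continuous (fun C : 'M[R[i]]_n => M *m C).
Proof.
move=> C; apply/(@cvg_ballP _ ('M[R[i]]_n : normedModType R[i]) _ (nbhs C) (nbhs_filter C) (fun C => M *m C) (M *m C)) => e e0.
set S := \sum_(ik : 'I_n * 'I_n) `|M ik.1 ik.2|.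
have S0 : 0 <= S by apply: sumr_ge0 => ? _; exact: normr_ge0.
have K0 : 0 < 1 + S by apply: (lt_le_trans ltr01); rewrite lerDl.
set d := e / (1 + S).
have d0 : 0 < d by rewrite divr_gt0.
near=> C'.
have : ball C d C' by near: C'; exact: nbhsx_ballx.
move=> [_ H]; split => // a b.
have := H a b; rewrite /ball /= !mxE -sumrB => _.
under eq_bigr do rewrite -mulrBr.
apply: (le_lt_trans (ler_norm_sum _ _ _)).
apply: (@le_lt_trans _ _ (\sum_k `|M a k| * d)).
  apply: ler_sum => k _; rewrite normrM; apply: ler_wpM2l => //.
  by have := H k b; rewrite /ball /= => /ltW.
rewrite -mulr_suml.
apply: (@le_lt_trans _ _ (S * d)).
  apply: ler_wpM2r; first exact: ltW.
  rewrite /S -(pair_bigA _ (fun i k => `|M i k|)) /= [X in _ <= X](bigD1 a) //= lerDl.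
  by apply: sumr_ge0 => i _; apply: sumr_ge0 => ? _; exact: normr_ge0.
by rewrite /d mulrCA gtr_pMr // ltr_pdivrMr // mul1r ltrDr ltr01.
Unshelve. all: by end_near. Qed.


End Cont.

Import HBNNSimple.


Section compnnsfun.
Context d (T : measurableType d) (R : realType).
Variables (c : T -> T) (mc : measurable_fun setT c) (h : {nnsfun T >-> R}).

Definition hc := fun x => h (c x).
Let hc_meas : measurable_fun setT hc.
Proof. exact: measurableT_comp. Qed.
HB.instance Definition _ := isMeasurableFun.Build _ _ _ _ hc hc_meas.
Let hc_fin : finite_set (range hc).
Proof.
apply: (sub_finite_set _ (fimfunP h)) => _ [x _ <-]; exists (c x) => //.
Qed.
HB.instance Definition _ := FiniteImage.Build T R hc hc_fin.
Let hc_ge0 : forall x, (0 <= hc x)%R.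
Proof. by move=> x; rewrite /hc. Qed.
HB.instance Definition _ := isNonNegFun.Build T R hc hc_ge0.
Definition hc_nnsfun : {nnsfun T >-> R} := hc.
End compnnsfun.

Section cov.
Context d (T : measurableType d) (R : realType) (mu : {measure set T -> \bar R}).
Variables (phi psi : T -> T).
Hypotheses (phiK : cancel phi psi) (psiK : cancel psi phi)
  (mphi : measurable_fun setT phi) (mpsi : measurable_fun setT psi)
  (muphi : forall A, measurable A -> mu (phi @^-1` A) = mu A).

Let mupsi A : measurable A -> mu (psi @^-1` A) = mu A.
Proof.
move=> mA; rewrite -muphi; last first.
  by have := mpsi measurableT mA; rewrite setTI.
by congr (mu _); apply/seteqP; split=> x /=; rewrite /preimage /= phiK.
Qed.

Let sintegral_comp (c : T -> T) (mc : measurable_fun setT c) (h : {nnsfun T >-> R}) :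
  (forall A, measurable A -> mu (c @^-1` A) = mu A) ->
  sintegral mu (hc_nnsfun mc h) = sintegral mu h.
Proof.
move=> H; rewrite /sintegral; apply: eq_fsbigr => r _; congr (_ * _)%E.
rewrite -[RHS]H //; exact: measurable_funPTI.
Qed.

Let nnint_comp (f : T -> \bar R) :
  ereal_sup [set sintegral mu h | h in [set h : {nnsfun T >-> R} | forall x, ((h x)%:E <= f (phi x))%E]] =
  ereal_sup [set sintegral mu h | h in [set h : {nnsfun T >-> R} | forall x, ((h x)%:E <= f x)%E]].
Proof.
congr ereal_sup; apply/seteqP; split => _ [h hf <-].
- exists (hc_nnsfun mpsi h).
    by move=> x /=; have := hf (psi x); rewrite psiK.
  exact: sintegral_comp mupsi.
- exists (hc_nnsfun mphi h); first by move=> x; exact: hf (phi x).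
  exact: sintegral_comp muphi.
Qed.

Lemma integral_comp (D : set T) (f : T -> \bar R) : (forall x, D (phi x) <-> D x) ->
  (\int[mu]_(x in D) f (phi x) = \int[mu]_(x in D) f x)%E.
Proof.
move=> HD.
have E : (fun x => f (phi x)) \_ D = (f \_ D) \o phi.
  apply/funext => x; rewrite /patch /=.
  have HDb : (phi x \in D) = (x \in D).
    by apply/idP/idP => /set_mem/HD/mem_set.
  by rewrite HDb.
rewrite /integral E.
have P1 : funepos ((f \_ D) \o phi) = (fun x => funepos (f \_ D) (phi x)) by apply/funext => x; rewrite !funeposE.
have P2 : funeneg ((f \_ D) \o phi) = (fun x => funeneg (f \_ D) (phi x)) by apply/funext => x; rewrite !funenegE.
by rewrite P1 P2 !nnint_comp.
Qed.
End cov.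


Section Main.
Variables (R : realType) (n N : nat) (G : set 'M[R[i]]_n)
  (eta : probability (borelM R n) R) (eps : R) (x : 'I_N -> 'cV[R[i]]_n).
Hypotheses (HG : compact_unitary_group G) (Heta : normalized_haar G eta).

Lemma mulmx_measurable (M : 'M[R[i]]_n) :
  measurable_fun setT (fun C : borelM R n => (M *m C : borelM R n)).
Proof.
apply: (@measurability _ _ (borelM R n) (borelM R n) setT (fun C : borelM R n => (M *m C : borelM R n)) (@open 'M[R[i]]_n)) => //.
move=> _ [U oU <-]; apply: sub_sigma_algebra; rewrite setTI.
by apply: open_comp => // C _; exact: mulmx_continuous.
Qed.

Lemma intG_comp (M : 'M[R[i]]_n) (f : 'M[R[i]]_n -> R) : G M ->
  intG G eta (fun C => f (M *m C)) = intG G eta f.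
Proof.
move=> GM.
case: HG => _ G1 GM2 GV GU.
have [_ uM] := mulmx1_unit (GU _ GM).
have GMi := GV _ GM.
rewrite /intG /Rintegral; congr fine.
apply: (@integral_comp _ _ _ eta (fun C : borelM R n => (M *m C : borelM R n))
  (fun C : borelM R n => (invmx M *m C : borelM R n))).
- exact: mulKmx.
- exact: mulKVmx.
- exact: mulmx_measurable.
- exact: mulmx_measurable.
- by move=> A mA; case: Heta => _ /(_ M GM A mA).
- move=> C; split => [GMC|GC]; last exact: GM2.
  by rewrite -(mulKmx uM C); exact: GM2.
Qed.

Lemma sqnormE (m : nat) (v : 'cV[R[i]]_m) :
  sqnorm v = complex.Re ((map_mx conjc v^T *m v) ord0 ord0).
Proof.
rewrite /sqnorm mxE.
rewrite (big_morph (@complex.Re R) (id1 := 0) (op1 := +%R)) //; last first.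
  by move=> [a b] [c d].
apply: eq_bigr => k _; rewrite !mxE.
by case: (v k ord0) => a b /=; rewrite !expr2 mulNr opprK.
Qed.

Lemma adjME (A : 'M[R[i]]_n) : adjM A = map_mx conjc A^T.
Proof. by apply/matrixP => a b; rewrite !mxE; case: (A b a). Qed.

Lemma sqnorm_unitary (U : 'M[R[i]]_n) (v : 'cV[R[i]]_n) :
  unitary U -> sqnorm (U *m v) = sqnorm v.
Proof.
rewrite /unitary adjME => HU.
rewrite !sqnormE trmx_mul map_mxM -mulmxA (mulmxA _ U) HU mul1mx.
by [].
Qed.

Section Inv.
Variables (i j : 'I_N) (Q : 'M[R[i]]_n).
Variable (Q' : 'M[R[i]]_n).
Hypotheses (GQ : G Q) (xQ : x j = Q *m x i) (GQ' : G Q') (QQ' : Q *m Q' = 1%:M).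

Let unitaryG A : G A -> unitary A.
Proof. by case: HG => _ _ _ _ GU; exact: GU. Qed.

Let W_inv l k (U A B : 'M[R[i]]_n) : G U ->
  Wk x eps l k (U *m A) (U *m B) = Wk x eps l k A B.
Proof.
move=> GU; rewrite /Wk -!mulmxA -mulmxBr sqnorm_unitary //; exact: unitaryG.
Qed.

Let Wj k C : Wk x eps j k 1%:M C = Wk x eps i k 1%:M (Q' *m C).
Proof.
apply: eq_trans _ (W_inv i k 1%:M (Q' *m C) GQ).
rewrite mulmx1 mulmxA QQ' mul1mx.
by rewrite /Wk !mul1mx xQ.
Qed.

Let Dj : Dk G eta x eps j = Dk G eta x eps i.
Proof.
rewrite /Dk; apply: eq_bigr => k _.
apply: eq_trans _ (intG_comp (fun C => Wk x eps i k 1%:M C) GQ').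
apply: (congr1 (intG G eta)); apply/funext => C; exact: Wj.
Qed.

Let P_inv l k (A B : 'M[R[i]]_n) :
  Pk G eta x eps l k (Q' *m A) (Q' *m B) = Pk G eta x eps l k A B.
Proof. by rewrite /Pk W_inv. Qed.

Let Pj k C : Pk G eta x eps j k 1%:M C = Pk G eta x eps i k 1%:M (Q' *m C).
Proof. exact: (congr2 (fun a b => a / b) (Wj k C) Dj). Qed.

Lemma Pt_inv t k C :
  Pt G eta x eps t j k 1%:M C = Pt G eta x eps t i k 1%:M (Q' *m C).
Proof.
elim: t k C => [|t IH] k C; first exact: Pj.
case: t IH => [|t] IH; first exact: Pj.
apply: eq_bigr => l _.
apply: eq_trans _ (intG_comp (fun C' => Pt G eta x eps t.+1 i l 1%:M C' * Pk G eta x eps l k C' (Q' *m C)) GQ').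
apply: (congr1 (intG G eta)); apply/funext => C' /=.
exact: (congr2 (fun a b => a * b) (IH l C') (esym (P_inv l k C' C))).
Qed.

Lemma oconv_inv t k r Rm :
  oconv G eta (fun k C => Pt G eta x eps t i k 1%:M C)
              (fun k C => Pt G eta x eps t i k 1%:M C) k r Rm =
  oconv G eta (fun k C => Pt G eta x eps t j k 1%:M C)
              (fun k C => Pt G eta x eps t j k 1%:M C) k r Rm.
Proof.
rewrite /oconv; apply: esym.
apply: eq_trans _ (intG_comp (fun C => Pt G eta x eps t i k 1%:M C * Pt G eta x eps t i r 1%:M (C *m Rm)) GQ').
apply: (congr1 (intG G eta)); apply/funext => C /=.
rewrite -mulmxA.
exact: (congr2 (fun a b => a * b) (Pt_inv t k C) (Pt_inv t r (C *m Rm))).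
Qed.
End Inv.

End Main.

Theorem proposition2 (R : realType) (n N : nat) (G : set 'M[R[i]]_n)
  (eta : probability (borelM R n) R) (eps : R) (x : 'I_N -> 'cV[R[i]]_n)
  (t : nat) (i j : 'I_N) (Q : 'M[R[i]]_n) :
  compact_unitary_group G ->
  normalized_haar G eta ->
  0 < eps ->
  injective x ->
  (forall (l : 'I_N) (A : 'M[R[i]]_n), G A -> A != 1%:M -> A *m x l != x l) ->
  (0 < t)%N ->
  G Q -> x j = Q *m x i ->
  forall (k r : 'I_N) (Rm : 'M[R[i]]_n), G Rm ->
    oconv G eta (fun k C => Pt G eta x eps t i k 1%:M C)
                (fun k C => Pt G eta x eps t i k 1%:M C) k r Rm =
    oconv G eta (fun k C => Pt G eta x eps t j k 1%:M C)
                (fun k C => Pt G eta x eps t j k 1%:M C) k r Rm.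
Proof.
move=> HG Heta _ _ _ _ GQ xQ k r Rm _.
have [GU GV] : (forall A, G A -> unitary A) /\ (forall A, G A -> G (invmx A)).
  by case: HG.
have [_ uQ] := mulmx1_unit (GU _ GQ).
exact: (oconv_inv eps HG Heta GQ xQ (GV _ GQ) (mulmxV uQ) t k r Rm).
Qed.
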